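(* Let $d\geq 3$ be an integer and let $\rho_d^{(w)}=\frac{d+1}{d^3}I_{\mathbb{C}^d\otimes\mathbb{C}^d}-\frac{1}{d^2}V_d$ be the Werner state on $\mathbb{C}^d\otimes\mathbb{C}^d$, where $V_d$ is the flip operator, $V_d(\psi_1\otimes\psi_2)=\psi_2\otimes\psi_1$. Then for any three self-adjoint operators $J^{(a)},J^{(b_1)},J^{(b_2)}$ on $\mathbb{C}^d$ with operator norms $\|J^{(a)}\|,\|J^{(b_1)}\|,\|J^{(b_2)}\|\leq 1$, $$\Big|\,\mathrm{tr}\big[\rho_d^{(w)}(J^{(a)}\otimes J^{(b_1)})\big]-\mathrm{tr}\big[\rho_d^{(w)}(J^{(a)}\otimes J^{(b_2)})\big]\,\Big|\leq 1-\mathrm{tr}\big[\rho_d^{(w)}(J^{(b_1)}\otimes J^{(b_2)})\big].$$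
   Context: This is the perfect correlation form of the original Bell inequality for the Werner state; no assumption of perfect correlation $\mathrm{tr}[\rho_d^{(w)}(J^{(b_1)}\otimes J^{(b_1)})]=1$ is made. *)

(* Defs.v *)
(* Complex scalars: an arbitrary numClosedFieldType C
   (e.g. algC, or R[i] for a real type R, i.e. the usual complex numbers). *)
From HB Require Import structures.
From mathcomp Require Import all_boot all_order all_algebra.
From mathcomp Require Export mxtens.
Set Implicit Arguments. Unset Strict Implicit. Unset Printing Implicit Defensive.
Import Order.TTheory GRing.Theory Num.Theory.
Local Open Scope ring_scope.

(* C^d (x) C^d is identified with C^(d*d) via mxtens_index (i,j) = i*d + j,
   and J (x) K is the Kronecker product J *t K (mxtens). *)

Definition adjmx {C : numClosedFieldType} {m n : nat} (A : 'M[C]_(m, n)) : 'M[C]_(n, m) :=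
  \matrix_(i, j) (A j i)^*.

Definition selfadjoint {C : numClosedFieldType} {n : nat} (A : 'M[C]_n) : Prop :=
  adjmx A = A.

Definition vnorm2 {C : numClosedFieldType} {n : nat} (v : 'cV[C]_n) : C :=
  \sum_i `|v i 0| ^+ 2.

Definition opnorm_le1 {C : numClosedFieldType} {n : nat} (A : 'M[C]_n) : Prop :=
  forall v : 'cV[C]_n, vnorm2 (A *m v) <= vnorm2 v.

Definition flipmx {C : numClosedFieldType} (d : nat) : 'M[C]_(d * d) :=
  \matrix_(k, l) ((((mxtens_unindex k).1 == (mxtens_unindex l).2) &&
                   ((mxtens_unindex k).2 == (mxtens_unindex l).1))%:R : C).

Definition werner {C : numClosedFieldType} (d : nat) : 'M[C]_(d * d) :=
  ((d + 1)%:R / (d%:R ^+ 3)) *: 1%:M - (d%:R ^+ 2)^-1 *: flipmx d.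

Lemma flipmx_tens (C : numClosedFieldType) d (u v : 'cV[C]_d) :
  flipmx d *m (u *t v) = v *t u.
Proof.
apply/matrixP=> k z.
rewrite -[k]mxtens_unindexK -[z]mxtens_unindexK.
case: (mxtens_unindex k) => i j; case: (mxtens_unindex z) => p q.
rewrite tensmxE !mxE.
rewrite (bigD1 (mxtens_index (j, i))) //=.
rewrite big1 ?addr0; last first.
  move=> l; rewrite -[l]mxtens_unindexK; case: (mxtens_unindex l) => a b.
  rewrite /flipmx tensmxE mxE !mxtens_indexK /=.
  rewrite (inj_eq (can_inj (@mxtens_indexK d d))) xpair_eqE negb_and => hne.
  rewrite (eq_sym i b) (eq_sym j a).
  by case/orP: hne => /negbTE h; rewrite h ?andbF mul0r.
rewrite /flipmx tensmxE mxE !mxtens_indexK /= !eqxx mul1r mulrC.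
by rewrite (ord1 p) (ord1 q).
Qed.

(* Main.v *)
Require Import Defs.
From HB Require Import structures.
From mathcomp Require Import all_boot all_order all_algebra.
From mathcomp Require Import mxtens.
From mathcomp Require Import ring zify.
Import Order.TTheory GRing.Theory Num.Theory.
Local Open Scope ring_scope.

Section Basics.
Context {C : numClosedFieldType}.

Lemma sa_entry n (X : 'M[C]_n) : selfadjoint X -> forall i j, (X i j)^* = X j i.
Proof. by move=> h i j; rewrite -{2}h mxE. Qed.

Lemma adjmxM m n p (A : 'M[C]_(m, n)) (B : 'M[C]_(n, p)) :
  adjmx (A *m B) = adjmx B *m adjmx A.
Proof.
apply/matrixP=> i j; rewrite !mxE rmorph_sum; apply: eq_bigr => k _.
by rewrite !mxE rmorphM mulrC.
Qed.

Lemma adjmxK m n (A : 'M[C]_(m, n)) : adjmx (adjmx A) = A.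
Proof. by apply/matrixP=> i j; rewrite !mxE conjCK. Qed.

Lemma saD n (X Y : 'M[C]_n) : selfadjoint X -> selfadjoint Y -> selfadjoint (X + Y).
Proof.
move=> hX hY; apply/matrixP=> i j; rewrite !mxE rmorphD /=.
by rewrite !sa_entry.
Qed.

Lemma saN n (X : 'M[C]_n) : selfadjoint X -> selfadjoint (- X).
Proof. by move=> hX; apply/matrixP=> i j; rewrite !mxE rmorphN /= sa_entry. Qed.

Lemma saB n (X Y : 'M[C]_n) : selfadjoint X -> selfadjoint Y -> selfadjoint (X - Y).
Proof. by move=> hX hY; apply: saD => //; apply: saN. Qed.

Lemma sa_scalar n (c : C) : c^* = c -> selfadjoint (c%:M : 'M[C]_n).
Proof.
move=> hc; apply/matrixP=> i j; rewrite !mxE rmorphMn /= hc eq_sym //.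
Qed.

Lemma saZ n (c : C) (X : 'M[C]_n) : c^* = c -> selfadjoint X -> selfadjoint (c *: X).
Proof. by move=> hc hX; apply/matrixP=> i j; rewrite !mxE rmorphM /= hc sa_entry. Qed.

Lemma conj_tr n (X : 'M[C]_n) : selfadjoint X -> (\tr X)^* = \tr X.
Proof.
by move=> hX; rewrite /mxtrace rmorph_sum; apply: eq_bigr => i _; rewrite /= sa_entry.
Qed.

Lemma tr_adj n (A : 'M[C]_n) : \tr (adjmx A) = (\tr A)^*.
Proof. by rewrite /mxtrace rmorph_sum; apply: eq_bigr => i _; rewrite mxE. Qed.

Lemma conj_trM n (X Y : 'M[C]_n) : selfadjoint X -> selfadjoint Y ->
  (\tr (X *m Y))^* = \tr (X *m Y).
Proof.
move=> hX hY; rewrite -tr_adj adjmxM hX hY mxtrace_mulC //.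
Qed.

Lemma tr_KKadj_ge0 m n (K : 'M[C]_(m, n)) : 0 <= \tr (K *m adjmx K).
Proof.
rewrite /mxtrace; apply: sumr_ge0 => i _; rewrite mxE.
by apply: sumr_ge0 => j _; rewrite mxE mul_conjC_ge0.
Qed.

Lemma conj_nat (k : nat) : (k%:R : C)^* = k%:R.
Proof. by rewrite rmorph_nat. Qed.

End Basics.
Arguments sa_entry {C n X}.

Section Werner.
Context {C : numClosedFieldType}.

Lemma sum_tens m n (F : 'I_m * 'I_n -> C) :
  \sum_(k < m * n) F (mxtens_unindex k) = \sum_i \sum_j F (i, j).
Proof.
symmetry; rewrite pair_big /=. rewrite (reindex (@mxtens_unindex m n)) /=; last first.
  by exists (@mxtens_index m n)=> i; rewrite (mxtens_indexK, mxtens_unindexK).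
by [].
Qed.

Lemma tr_tens d (X Y : 'M[C]_d) : \tr (X *t Y) = \tr X * \tr Y.
Proof.
rewrite /mxtrace mulr_sum; apply: eq_bigr => k _; rewrite mxE //.
Qed.

Lemma tr_flip d (X Y : 'M[C]_d) : \tr (flipmx d *m (X *t Y)) = \tr (X *m Y).
Proof.
rewrite /mxtrace.
transitivity (\sum_(k < d * d)
   (fun p : 'I_d * 'I_d => X p.2 p.1 * Y p.1 p.2) (mxtens_unindex k)).
  apply: eq_bigr => k _; rewrite mxE.
  case: (mxtens_indexP k) => i j; rewrite mxtens_indexK /=.
  rewrite (bigD1 (mxtens_index (j, i))) //= big1 ?addr0; last first.
    move=> l; case: (mxtens_indexP l) => a b.
    rewrite /flipmx mxE !mxtens_indexK /=.
    rewrite (inj_eq (can_inj (@mxtens_indexK d d))) xpair_eqE negb_and => hne.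
    rewrite (eq_sym i b) (eq_sym j a).
    by case/orP: hne => /negbTE h; rewrite h ?andbF mul0r.
  by rewrite /flipmx mxE tensmxE !mxtens_indexK /= !eqxx mul1r.
rewrite (@sum_tens d d (fun p : 'I_d * 'I_d => X p.2 p.1 * Y p.1 p.2)) /= -/(mxtrace (X *m Y)) mxtrace_mulC /mxtrace.
apply: eq_bigr => i _; rewrite mxE; apply: eq_bigr => j _ /=; by rewrite mulrC.
Qed.

Definition uu d : C := (d + 1)%:R / (d%:R ^+ 3).
Definition ww d : C := (d%:R ^+ 2)^-1.
Definition ff d (X Y : 'M[C]_d) : C := uu d * \tr X * \tr Y - ww d * \tr (X *m Y).

Lemma werner_tr d (X Y : 'M[C]_d) : \tr (werner d *m (X *t Y)) = ff d X Y.
Proof.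
rewrite /werner mulmxBl -!scalemxAl mul1mx raddfB /= !mxtraceZ tr_tens tr_flip.
by rewrite /ff mulrA.
Qed.

End Werner.

Section Reduce.
Context {C : numClosedFieldType}.
Variable d : nat.

Lemma adj_tstar (A : 'M[C]_d) : adjmx A = (A ^t*)%sesqui.
Proof. by apply/matrixP=> i j; rewrite !mxE. Qed.

Lemma vnorm2E (v : 'cV[C]_d) : vnorm2 v = (adjmx v *m v) 0 0.
Proof.
rewrite /vnorm2 mxE; apply: eq_bigr => j _; by rewrite mxE normCKC.
Qed.

Lemma mxE_rowcol (A B : 'M[C]_d) i :
  (A *m B) i i = (row i A *m col i B) 0 0.
Proof. by rewrite !mxE; apply: eq_bigr => k _; rewrite !mxE. Qed.

Definition refl (R : 'M[C]_d) :=
  [/\ selfadjoint R, R *m R = 1%:M &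
      exists k, (k <= d)%N /\ \tr R = d%:R - 2 * k%:R].

Lemma reduce (X M : 'M[C]_d) : selfadjoint X -> opnorm_le1 X -> selfadjoint M ->
  exists R, refl R /\ \tr (X *m M) <= \tr (R *m M).
Proof.
move=> hX nX hM.
have Xn : X \is normalmx.
  by apply/normalmxP; rewrite -adj_tstar hX.
have XE := orthomx_spectralP Xn.
set P := spectralmx X in XE; set D := spectral_diag X in XE.
have Pu : P \is unitarymx by apply: spectral_unitarymx.
set Q := adjmx P.
have PQ : P *m Q = 1%:M by rewrite /Q adj_tstar; apply/unitarymxP.
have QP : Q *m P = 1%:M.
  by rewrite /Q adj_tstar -[_ *m P]mul1mx mulmxA (mulmxKtV _ Pu).
have XE' : X = Q *m diag_mx D *m P.
  by rewrite {1}XE /Q adj_tstar invmx_unitary.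
have adjQ : adjmx Q = P by rewrite /Q adjmxK.
have DE : diag_mx D = P *m X *m Q.
  by rewrite XE' !mulmxA PQ mul1mx -mulmxA PQ mulmx1.
have Dreal : forall i, (D 0 i)^* = D 0 i.
  move=> i.
  have hsa : selfadjoint (diag_mx D).
    by rewrite /selfadjoint DE !adjmxM adjQ hX /Q -mulmxA.
  by have := sa_entry hsa i i; rewrite !mxE eqxx !mulr1n.
have Dsq : forall i, D 0 i * D 0 i <= 1.
  move=> i.
  have -> : D 0 i * D 0 i = (P *m (X *m X) *m Q) i i.
    have -> : P *m (X *m X) *m Q = diag_mx D *m diag_mx D.
      by rewrite DE !mulmxA -(mulmxA _ Q P) QP mulmx1.
    by rewrite mulmx_diag !mxE eqxx !mulr1n.
  set v := col i Q.
  have rowP : row i P = adjmx v.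
    by apply/matrixP=> a b; rewrite !mxE -adjQ mxE conjCK.
  have -> : (P *m (X *m X) *m Q) i i = vnorm2 (X *m v).
    rewrite vnorm2E adjmxM hX mxE_rowcol !row_mul rowP mulmxA.
    by rewrite -mulmxA.
  have <- : vnorm2 v = 1.
    rewrite vnorm2E -rowP.
    have -> : row i P *m v = ((P *m Q) i i)%:M.
      by apply/matrixP=> a b; rewrite (ord1 a) (ord1 b) mxE_rowcol !mxE mulr1n.
    by rewrite PQ !mxE eqxx !mulr1n.
  exact: nX.
have Dbnd : forall i, -1 <= D 0 i <= 1.
  move=> i.
  have re : D 0 i \is Num.real by rewrite CrealE Dreal.
  rewrite -real_ler_norml //.
  by rewrite -(@expr_le1 _ 2) // real_normK // expr2 Dsq.
set N := P *m M *m Q.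
have Nsa : selfadjoint N by rewrite /selfadjoint /N !adjmxM adjQ hM /Q mulmxA.
have Nreal : forall i, N i i \is Num.real.
  by move=> i; rewrite CrealE sa_entry.
set b := fun i : 'I_d => ~~ (0 <= N i i).
set E := \row_i ((-1) ^+ b i : C).
have trXM : \tr (X *m M) = \sum_i D 0 i * N i i.
  rewrite XE' -!mulmxA mxtrace_mulC -mulmxA.
  by rewrite mul_diag_mx /mxtrace; apply: eq_bigr => i _; rewrite !mxE.
set R := Q *m diag_mx E *m P.
have trRM : \tr (R *m M) = \sum_i E 0 i * N i i.
  rewrite /R -!mulmxA mxtrace_mulC -mulmxA.
  by rewrite mul_diag_mx /mxtrace; apply: eq_bigr => i _; rewrite !mxE.
exists R; split; last first.
  rewrite trXM trRM; apply: ler_sum => i _; rewrite [E 0 i]mxE.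
  have /andP [h1 h2] := Dbnd i.
  rewrite /b; case: (boolP (0 <= N i i)) => hN /=.
    by rewrite expr0; apply: (le_trans (ler_wpM2r hN h2)); rewrite mul1r.
  have hN' : N i i <= 0.
    by move: (Nreal i); rewrite realE (negbTE hN).
  by rewrite expr1; apply: (ler_wnM2r hN' h1).
split.
- rewrite /selfadjoint /R !adjmxM adjQ /Q mulmxA.
  congr (_ *m _ *m _); apply/matrixP=> a c; rewrite !mxE rmorphMn /=.
  rewrite (eq_sym c a); case: eqP => [->|_]; rewrite ?mulr0n ?mulr1n //.
  by case: (b c); rewrite ?expr0 ?expr1 ?conjC1 ?conjCN1.
- rewrite /R !mulmxA -(mulmxA _ P Q) PQ mulmx1 -(mulmxA Q) mulmx_diag.
  have -> : diag_mx (\row_j (E 0 j * E 0 j)) = 1%:M :> 'M[C]_d.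
    apply/matrixP=> a c; rewrite !mxE -signr_addb addbb expr0.
    by [].
  by rewrite mulmx1 QP.
- exists (\sum_i (b i : nat))%N; split.
    rewrite -[X in (_ <= X)%N]card_ord -sum1_card; apply: leq_sum => i _.
    by case: (b i).
  rewrite /R mxtrace_mulC mulmxA PQ mul1mx mxtrace_diag natr_sum mulr_sumr.
  have -> : (d%:R : C) = \sum_(j < d) 1 by rewrite sumr_const card_ord.
  rewrite -sumrB.
  by apply: eq_bigr => i _; rewrite mxE signrE; case: (b i); rewrite /= ?mulr0 ?mulr1 ?subr0.
Qed.

End Reduce.
Arguments refl {C d}.

Definition Gs (d a b c : int) : int :=
  d^+3 - d^+2 * (a + b + c) + (d + 1) * (a * b + a * c + b * c) - d * (2 * a + b).

Lemma Hbb_ge0 (d b : int) : 3 <= d ->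
  0 <= d^+3 - 3 * d * (d + 1) * b + 3 * (d + 1) * b^+2.
Proof.
move=> hd.
have E : 12 * (d + 1) * (d^+3 - 3 * d * (d + 1) * b + 3 * (d + 1) * b^+2) =
   (6 * (d + 1) * b - 3 * d * (d + 1))^+2 + 3 * d^+2 * (d + 1) * (d - 3) by ring.
have h1 : 0 <= (6 * (d + 1) * b - 3 * d * (d + 1))^+2 + 3 * d^+2 * (d + 1) * (d - 3).
  apply: addr_ge0; first exact: sqr_ge0.
  apply: mulr_ge0; last by rewrite subr_ge0.
  apply: mulr_ge0; last by lia.
  apply: mulr_ge0 => //; exact: sqr_ge0.
rewrite -E in h1.
have h2 : 0 < 12 * (d + 1) by lia.
by rewrite pmulr_rge0 in h1.
Qed.

Lemma H_ge0 (d a b : int) : 3 <= d -> 0 <= a -> a <= b -> b <= d - 1 ->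
  0 <= d^+3 - d^+2 * a - 2 * d^+2 * b + 2 * (d + 1) * a * b + (d + 1) * b^+2 - 2 * a * d - b * d.
Proof.
move=> hd ha hab hb.
have [b0|bpos] := eqVneq b 0.
  have a0 : a = 0 by lia.
  rewrite b0 a0; nia.
have hbp : 0 < b by lia.
have H0 : 0 <= (d - b) * (d^+2 - (d + 1) * b).
  apply: mulr_ge0; first lia.
  have : (d + 1) * b <= (d + 1) * (d - 1) by apply: ler_wpM2l; lia.
  have -> : (d + 1) * (d - 1) = d^+2 - 1 by ring.
  lia.
have Hb := @Hbb_ge0 d b hd.
have E : b * (d^+3 - d^+2 * a - 2 * d^+2 * b + 2 * (d + 1) * a * b + (d + 1) * b^+2 - 2 * a * d - b * d)
   = (b - a) * ((d - b) * (d^+2 - (d + 1) * b)) + a * (d^+3 - 3 * d * (d + 1) * b + 3 * (d + 1) * b^+2) by ring.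
have : 0 <= b * (d^+3 - d^+2 * a - 2 * d^+2 * b + 2 * (d + 1) * a * b + (d + 1) * b^+2 - 2 * a * d - b * d).
  rewrite E; apply: addr_ge0; apply: mulr_ge0 => //; lia.
by rewrite pmulr_rge0.
Qed.

Lemma Gs_ge0 (d a b c : int) : 3 <= d -> 0 <= a -> a <= b -> b <= c -> c <= d ->
  0 <= Gs d a b c.
Proof.
move=> hd ha hab hbc hc.
have [bd|bd] := eqVneq b d.
  have cd : c = d by lia.
  have -> : Gs d a b c = a * d^+2 by rewrite /Gs bd cd; ring.
  apply: mulr_ge0 => //; exact: sqr_ge0.
have hb : b <= d - 1 by lia.
have HH := @H_ge0 d a b hd ha hab hb.
have E : (d - b) * Gs d a b c =
  (d - c) * (d^+3 - d^+2 * a - 2 * d^+2 * b + 2 * (d + 1) * a * b + (d + 1) * b^+2 - 2 * a * d - b * d)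
  + (c - b) * (a * ((d + 1) * b - d)) by rewrite /Gs; ring.
have h2 : 0 <= a * ((d + 1) * b - d).
  have [a0|apos] := eqVneq a 0; first by rewrite a0 mul0r.
  apply: mulr_ge0 => //; nia.
have : 0 <= (d - b) * Gs d a b c.
  rewrite E; apply: addr_ge0; apply: mulr_ge0 => //; lia.
have hdb : 0 < d - b by lia.
by rewrite pmulr_rge0.
Qed.

Definition Gm (d a b c : int) : int :=
  d^+3 - d^+2 * (a + b + c) + (d + 1) * (a * b + a * c + b * c)
  - d * (Num.min a b + Num.min a c + Num.min b c).

Lemma Gm_ge0 (d a b c : int) : 3 <= d -> 0 <= a <= d -> 0 <= b <= d -> 0 <= c <= d ->
  0 <= Gm d a b c.
Proof.
move=> hd /andP[ha ha'] /andP[hb hb'] /andP[hc hc'].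
rewrite /Gm.
have [hab|hab] := lerP a b; have [hac|hac] := lerP a c; have [hbc|hbc] := lerP b c;
  rewrite ?(min_l hab) ?(min_r (ltW hab)) ?(min_l hac) ?(min_r (ltW hac)) ?(min_l hbc) ?(min_r (ltW hbc)).
- have := @Gs_ge0 d a b c hd ha hab hbc hc'; rewrite /Gs => h; apply: le_trans h _; rewrite le_eqVlt; apply/orP; left; apply/eqP; ring.
- have := @Gs_ge0 d a c b hd ha hac (ltW hbc) hb'; rewrite /Gs => h; apply: le_trans h _; rewrite le_eqVlt; apply/orP; left; apply/eqP; ring.
- lia.
- have := @Gs_ge0 d c a b hd hc (ltW hac) hab hb'; rewrite /Gs => h; apply: le_trans h _; rewrite le_eqVlt; apply/orP; left; apply/eqP; ring.
- have := @Gs_ge0 d b a c hd hb (ltW hab) hac hc'; rewrite /Gs => h; apply: le_trans h _; rewrite le_eqVlt; apply/orP; left; apply/eqP; ring.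
- lia.
- have := @Gs_ge0 d b c a hd hb hbc (ltW hac) ha'; rewrite /Gs => h; apply: le_trans h _; rewrite le_eqVlt; apply/orP; left; apply/eqP; ring.
- have := @Gs_ge0 d c b a hd hc (ltW hbc) (ltW hab) ha'; rewrite /Gs => h; apply: le_trans h _; rewrite le_eqVlt; apply/orP; left; apply/eqP; ring.
Qed.

Section Refl.
Context {C : numClosedFieldType}.
Variable d : nat.

Lemma trPPQQ (P Q : 'M[C]_d) : selfadjoint P -> selfadjoint Q ->
  0 <= \tr (P *m P *m (Q *m Q)).
Proof.
move=> hP hQ.
have -> : \tr (P *m P *m (Q *m Q)) = \tr ((P *m Q) *m adjmx (P *m Q)).
  rewrite adjmxM hP hQ -mulmxA mxtrace_mulC !mulmxA //.
exact: tr_KKadj_ge0.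
Qed.

Lemma refl_pair (X Y : 'M[C]_d) (e f : bool) : refl X -> refl Y ->
  0 <= d%:R + (-1)^+e * \tr X + (-1)^+f * \tr Y + ((-1)^+e * (-1)^+f) * \tr (X *m Y).
Proof.
move=> [hX XX _] [hY YY _].
have ss : ((-1)^+e : C) * (-1)^+e = 1 by rewrite -signr_addb addbb.
have tt : ((-1)^+f : C) * (-1)^+f = 1 by rewrite -signr_addb addbb.
have sc : ((-1)^+e : C)^* = (-1)^+e by clear ss tt; case: e; rewrite ?expr0 ?expr1 ?conjC1 ?conjCN1.
have tc : ((-1)^+f : C)^* = (-1)^+f by clear ss tt sc; case: f; rewrite ?expr0 ?expr1 ?conjC1 ?conjCN1.
set s : C := (-1)^+e in ss sc *; set t : C := (-1)^+f in tt tc *.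
set P := 1%:M + s *: X; set Q := 1%:M + t *: Y.
have hP : selfadjoint P by apply: saD; [apply: sa_scalar; rewrite conjC1 | apply: saZ].
have hQ : selfadjoint Q by apply: saD; [apply: sa_scalar; rewrite conjC1 | apply: saZ].
have PP : P *m P = 2 *: P.
  rewrite /P mulmxDl !mulmxDr !mul1mx mulmx1 -!scalemxAl -!scalemxAr XX scalerA ss.
  by rewrite scale1r scalerDr scaler_nat addrA addrC !addrA -mulr2n scaler_nat -addrA -mulr2n.
have QQ : Q *m Q = 2 *: Q.
  rewrite /Q mulmxDl !mulmxDr !mul1mx mulmx1 -!scalemxAl -!scalemxAr YY scalerA tt.
  by rewrite scale1r scalerDr scaler_nat addrA addrC !addrA -mulr2n scaler_nat -addrA -mulr2n.
have := @trPPQQ P Q hP hQ.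
rewrite PP QQ -scalemxAl -scalemxAr !mxtraceZ.
have -> : \tr (P *m Q) = d%:R + s * \tr X + t * \tr Y + (s * t) * \tr (X *m Y).
  rewrite /P /Q mulmxDl !mulmxDr !mul1mx mulmx1 -!scalemxAl -!scalemxAr.
  rewrite !raddfD /= !mxtraceZ mxtrace1; ring.
move=> h; rewrite -(@pmulr_rge0 _ (2 * 2)) //.
  by rewrite -mulrA.
by rewrite mulr_gt0 ?ltr0n.
Qed.

End Refl.

Lemma le_of_sub {R : numDomainType} {x y z : R} : 0 <= z -> z = y - x -> x <= y.
Proof. by move=> h e; rewrite -subr_ge0 -e. Qed.

Lemma intr_natC {R : pzRingType} (n : nat) : ((n%:Z)%:~R : R) = n%:R.
Proof. by rewrite -pmulrn. Qed.

Section Bell.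
Context {C : numClosedFieldType}.
Variable d : nat.

Lemma refl_bell (X Y Z : 'M[C]_d) : (3 <= d)%N -> refl X -> refl Y -> refl Z ->
  ff d X Y + ff d X Z - ff d Y Z <= 1.
Proof.
move=> hd rX rY rZ.
case: (rX) => _ _ [kx [kxd trX]].
case: (rY) => _ _ [ky [kyd trY]].
case: (rZ) => _ _ [kz [kzd trZ]].
set a : int := kx%:Z; set b : int := d%:Z - ky%:Z; set c : int := d%:Z - kz%:Z.
have hG : 0 <= Gm d%:Z a b c.
  apply: Gm_ge0; rewrite /a /b /c; lia.
have hGC : (0 : C) <= (Gm d%:Z a b c)%:~R by rewrite ler0z.
have ea : (a%:~R : C) = kx%:R by rewrite intr_natC.
have eb : (b%:~R : C) = d%:R - ky%:R by rewrite rmorphB /= !intr_natC.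
have ec : (c%:~R : C) = d%:R - kz%:R by rewrite rmorphB /= !intr_natC.
set mab : C := (Num.min a b)%:~R.
set mac : C := (Num.min a c)%:~R.
set mbc : C := (Num.min b c)%:~R.
have eG : ((Gm d%:Z a b c)%:~R : C) =
   d%:R^+3 - d%:R^+2 * (a%:~R + b%:~R + c%:~R)
   + (d%:R + 1) * (a%:~R * b%:~R + a%:~R * c%:~R + b%:~R * c%:~R)
   - d%:R * (mab + mac + mbc).
  rewrite /Gm /mab /mac /mbc.
  rewrite !(rmorphB, rmorphD, rmorphM, rmorphXn) /= intr_natC rmorph1 //.
rewrite ea eb ec in eG.
set pXY := \tr (X *m Y); set pXZ := \tr (X *m Z); set pYZ := \tr (Y *m Z).
have hXY : - d%:R + 2 * (kx%:R + (d%:R - ky%:R)) - 4 * mab <= pXY.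
  rewrite /mab; case: (lerP a b) => h.
    rewrite ea.
    have := @refl_pair _ _ _ _ true true rX rY; rewrite trX trY /= expr1 => h0.
    by apply: (le_of_sub h0); rewrite -/pXY; ring.
  rewrite eb.
  have := @refl_pair _ _ _ _ false false rX rY; rewrite trX trY /= expr0 => h0.
  by apply: (le_of_sub h0); rewrite -/pXY; ring.
have hXZ : - d%:R + 2 * (kx%:R + (d%:R - kz%:R)) - 4 * mac <= pXZ.
  rewrite /mac; case: (lerP a c) => h.
    rewrite ea.
    have := @refl_pair _ _ _ _ true true rX rZ; rewrite trX trZ /= expr1 => h0.
    by apply: (le_of_sub h0); rewrite -/pXZ; ring.
  rewrite ec.
  have := @refl_pair _ _ _ _ false false rX rZ; rewrite trX trZ /= expr0 => h0.
  by apply: (le_of_sub h0); rewrite -/pXZ; ring.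
have hYZ : pYZ <= d%:R - 2 * ((d%:R - ky%:R) + (d%:R - kz%:R)) + 4 * mbc.
  rewrite /mbc; case: (lerP b c) => h.
    rewrite eb.
    have := @refl_pair _ _ _ _ false true rY rZ; rewrite trY trZ /= expr0 expr1 => h0.
    by apply: (le_of_sub h0); rewrite -/pYZ; ring.
  rewrite ec.
  have := @refl_pair _ _ _ _ true false rY rZ; rewrite trY trZ /= expr0 expr1 => h0.
  by apply: (le_of_sub h0); rewrite -/pYZ; ring.
have dn0 : (d%:R : C) != 0 by rewrite pnatr_eq0 -lt0n; apply: leq_trans hd.
set GC := (d%:R^+3 - d%:R^+2 * (kx%:R + (d%:R - ky%:R) + (d%:R - kz%:R))
   + (d%:R + 1) * (kx%:R * (d%:R - ky%:R) + kx%:R * (d%:R - kz%:R)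
        + (d%:R - ky%:R) * (d%:R - kz%:R))
   - d%:R * (mab + mac + mbc) : C).
have hGC' : 0 <= GC by rewrite /GC -eG.
rewrite /ff /uu /ww trX trY trZ -/pXY -/pXZ -/pYZ.
apply: (le_of_sub (z := (4 * GC + d%:R * ((pXY - (- d%:R + 2 * (kx%:R + (d%:R - ky%:R)) - 4 * mab))
   + (pXZ - (- d%:R + 2 * (kx%:R + (d%:R - kz%:R)) - 4 * mac))
   + (d%:R - 2 * ((d%:R - ky%:R) + (d%:R - kz%:R)) + 4 * mbc - pYZ))) / d%:R^+3)).
  apply: divr_ge0; last by rewrite exprn_ge0 ?ler0n.
  apply: addr_ge0; first by apply: mulr_ge0.
  apply: mulr_ge0; first by rewrite ler0n.
  by apply: addr_ge0; [apply: addr_ge0|]; rewrite subr_ge0.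
rewrite /GC; field.
by [].
Qed.
End Bell.

Section Main.
Context {C : numClosedFieldType}.
Variable d : nat.

Definition LL (Y : 'M[C]_d) : 'M[C]_d := (uu d * \tr Y)%:M - ww d *: Y.

Lemma ff_tr (X Y : 'M[C]_d) : ff d X Y = \tr (X *m LL Y).
Proof.
rewrite /ff /LL mulmxBr mul_mx_scalar -scalemxAr raddfB /= !mxtraceZ; ring.
Qed.

Lemma ff_sym (X Y : 'M[C]_d) : ff d X Y = ff d Y X.
Proof. by rewrite /ff mxtrace_mulC; ring. Qed.

Lemma ffN (X Y : 'M[C]_d) : ff d X (- Y) = - ff d X Y.
Proof. rewrite /ff mulmxN !raddfN /=; ring. Qed.

Lemma conj_uu : (uu d : C)^* = uu d.
Proof. by rewrite /uu rmorphM /= fmorphV /= rmorphXn /= !rmorph_nat. Qed.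

Lemma conj_ww : (ww d : C)^* = ww d.
Proof. by rewrite /ww fmorphV /= rmorphXn /= !rmorph_nat. Qed.

Lemma sa_LL (Y : 'M[C]_d) : selfadjoint Y -> selfadjoint (LL Y).
Proof.
move=> hY; apply: saB; last by apply: saZ => //; exact: conj_ww.
by apply: sa_scalar; rewrite rmorphM /= conj_uu conj_tr.
Qed.

Lemma ff_real (X Y : 'M[C]_d) : selfadjoint X -> selfadjoint Y -> (ff d X Y)^* = ff d X Y.
Proof.
move=> hX hY; apply/eqP; rewrite -CrealE /ff.
have ru : uu d \is @Num.real C by rewrite CrealE conj_uu.
have rw : ww d \is @Num.real C by rewrite CrealE conj_ww.
have rX : \tr X \is Num.real by rewrite CrealE conj_tr.
have rY : \tr Y \is Num.real by rewrite CrealE conj_tr.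
have rXY : \tr (X *m Y) \is Num.real by rewrite CrealE conj_trM.
by apply: rpredB; apply: rpredM => //; apply: rpredM.
Qed.

Lemma opnormN (X : 'M[C]_d) : opnorm_le1 X -> opnorm_le1 (- X).
Proof.
move=> h v; rewrite mulNmx.
have -> : vnorm2 (- (X *m v)) = vnorm2 (X *m v).
  by rewrite /vnorm2; apply: eq_bigr => i _; rewrite mxE normrN.
exact: h.
Qed.

Lemma bell_gen (X Y Z : 'M[C]_d) : (3 <= d)%N ->
  selfadjoint X -> selfadjoint Y -> selfadjoint Z ->
  opnorm_le1 X -> opnorm_le1 Y -> opnorm_le1 Z ->
  ff d X Y + ff d X Z - ff d Y Z <= 1.
Proof.
move=> hd hX hY hZ nX nY nZ.
have [R1 [r1 h1]] := @reduce _ _ _ _ hX nX (@saD _ _ _ _ (sa_LL _ hY) (sa_LL _ hZ)).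
have s1 : ff d X Y + ff d X Z - ff d Y Z <= ff d R1 Y + ff d R1 Z - ff d Y Z.
  by rewrite !(ff_tr X) !(ff_tr R1) lerD2r; move: h1; rewrite !mulmxDr !raddfD.
apply: (le_trans s1).
case: (r1) => hR1 _ _.
have [R2 [r2 h2]] := @reduce _ _ _ _ hY nY (@saB _ _ _ _ (sa_LL _ hR1) (sa_LL _ hZ)).
have s2 : ff d R1 Y + ff d R1 Z - ff d Y Z <= ff d R1 R2 + ff d R1 Z - ff d R2 Z.
  have E : forall W, ff d R1 W + ff d R1 Z - ff d W Z
      = \tr (W *m (LL R1 - LL Z)) + ff d R1 Z.
    move=> W; rewrite mulmxBr.
    have -> : \tr (W *m LL R1 - W *m LL Z) = \tr (W *m LL R1) - \tr (W *m LL Z) by apply: raddfB.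
    rewrite -!ff_tr (ff_sym R1 W); ring.
  by rewrite !E lerD2r.
apply: (le_trans s2).
case: (r2) => hR2 _ _.
have [R3 [r3 h3]] := @reduce _ _ _ _ hZ nZ (@saB _ _ _ _ (sa_LL _ hR1) (sa_LL _ hR2)).
have s3 : ff d R1 R2 + ff d R1 Z - ff d R2 Z <= ff d R1 R2 + ff d R1 R3 - ff d R2 R3.
  have E : forall W, ff d R1 R2 + ff d R1 W - ff d R2 W
      = \tr (W *m (LL R1 - LL R2)) + ff d R1 R2.
    move=> W; rewrite mulmxBr.
    have -> : \tr (W *m LL R1 - W *m LL R2) = \tr (W *m LL R1) - \tr (W *m LL R2) by apply: raddfB.
    rewrite -!ff_tr (ff_sym R1 W) (ff_sym R2 W); ring.
  by rewrite !E lerD2r.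
apply: (le_trans s3).
exact: (@refl_bell _ _ _ _ _ hd r1 r2 r3).
Qed.

End Main.

Theorem mainTheorem2 (C : numClosedFieldType) (d : nat) (hd : (3 <= d)%N)
  (Ja Jb1 Jb2 : 'M[C]_d)
  (hJa : selfadjoint Ja) (hJb1 : selfadjoint Jb1) (hJb2 : selfadjoint Jb2)
  (nJa : opnorm_le1 Ja) (nJb1 : opnorm_le1 Jb1) (nJb2 : opnorm_le1 Jb2) :
  `| \tr (werner d *m (Ja *t Jb1)) - \tr (werner d *m (Ja *t Jb2)) |
    <= 1 - \tr (werner d *m (Jb1 *t Jb2)).
Proof.
rewrite !werner_tr.
have re : ff d Ja Jb1 - ff d Ja Jb2 \is Num.real.
  by rewrite CrealE rmorphB /= !ff_real.
rewrite real_ler_norml //; apply/andP; split.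
- have := @bell_gen _ _ _ _ _ hd hJa hJb2 (@saN _ _ _ hJb1) nJa nJb2 (@opnormN _ _ _ nJb1).
  rewrite !ffN (@ff_sym _ _ Jb2 Jb1) => h.
  rewrite -subr_ge0; rewrite -subr_ge0 in h.
  by move: h; congr (_ <= _); ring.
- have := @bell_gen _ _ _ _ _ hd hJa hJb1 (@saN _ _ _ hJb2) nJa nJb1 (@opnormN _ _ _ nJb2).
  rewrite !ffN => h.
  rewrite -subr_ge0; rewrite -subr_ge0 in h.
  by move: h; congr (_ <= _); ring.
Qed.
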